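(* There exists a compactly quasinilpotent Banach algebra which has no non-zero hypocompact ideals. (For example, $A=V\widehat{\otimes}C[0,1]$, where $V=\ell^1(w)$ with convolution $e_ie_j=e_{i+j}$ for a weight $w=(w_k)_{k\ge1}$ with $w_{k+1}/w_k\to0$, e.g. $w_k=k^{-k}$; this $A$ has no non-zero compact elements.)
   Context: For a bounded subset $M$ of a normed algebra, $\|M\|=\sup_{a\in M}\|a\|$, $M^n=\{a_1\cdots a_n:a_i\in M\}$ and $\rho(M)=\lim_n\|M^n\|^{1/n}$. A Banach algebra $A$ is compactly quasinilpotent if $\rho(M)=0$ for every precompact $M\subseteq A$. An element $a$ of a normed algebra $A$ is compact if the operator $x\mapsto axa$ on $A$ is compact. A normed algebra is hypocompact if every non-zero quotient $A/J$ by a closed ideal $J$ has a non-zero compact element; an ideal is hypocompact if it is hypocompact as a normed algebra. $\widehat\otimes$ is the projective tensor product; $\ell^1(w)$ is the space of sequences $\sum\lambda_ke_k$ with $\sum|\lambda_k|w_k<\infty$. *)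

(* Defs.v *)
From HB Require Import structures.
From mathcomp Require Import all_boot all_order all_algebra.
From mathcomp Require Import all_classical all_reals all_analysis.
From mathcomp Require Import complex.
Set Implicit Arguments. Unset Strict Implicit. Unset Printing Implicit Defensive.
Import Order.TTheory GRing.Theory Num.Theory.
Local Open Scope classical_set_scope.
Local Open Scope ring_scope.

Section BanachAlgebras.
Variables (R : realType) (V : lmodType R[i]) (mul : V -> V -> V) (N : V -> R).

Definition is_norm : Prop :=
  [/\ forall v, 0 <= N v,
      forall v, N v = 0 -> v = 0,
      forall (k : R[i]) v, N (k *: v) = ComplexField.Normc.normc k * N v
    & forall u v, N (u + v) <= N u + N v].

Definition is_complete : Prop :=
  forall u : nat -> V,
    (forall e : R, 0 < e -> exists M : nat, forall m n : nat,
        (M <= m)%N -> (M <= n)%N -> N (u m - u n) < e) ->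
    exists l : V, forall e : R, 0 < e -> exists M : nat, forall n : nat,
        (M <= n)%N -> N (u n - l) < e.

Definition is_normed_algebra_mul : Prop :=
  [/\ forall a b c, mul a (mul b c) = mul (mul a b) c,
      (forall a b c, mul (a + b) c = mul a c + mul b c) /\
      (forall a b c, mul a (b + c) = mul a b + mul a c),
      forall (k : R[i]) a b, mul (k *: a) b = k *: mul a b,
      forall (k : R[i]) a b, mul a (k *: b) = k *: mul a b
    & forall a b, N (mul a b) <= N a * N b].

Definition banach_algebra : Prop :=
  [/\ is_norm, is_complete & is_normed_algebra_mul].

Definition totally_bounded_in (p : V -> R) (X S : set V) : Prop :=
  forall e : R, 0 < e -> exists (k : nat) (y : nat -> V),
    (forall i, (i < k)%N -> X (y i)) /\
    forall x, S x -> exists i, (i < k)%N /\ p (x - y i) < e.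

Definition precompact_set (M : set V) : Prop := totally_bounded_in N setT M.

(* setpow M n = M^(n+1) = { a_1 ... a_(n+1) : a_i in M } *)
Fixpoint setpow (M : set V) (n : nat) : set V :=
  match n with
  | 0 => M
  | n'.+1 => [set c | exists a b, [/\ setpow M n' a, M b & c = mul a b]]
  end.

Definition set_norm (M : set V) : R := sup [set N a | a in M].

(* rho(M) = lim_n ||M^n||^(1/n) = 0 *)
Definition jsr_zero (M : set V) : Prop :=
  forall e : R, 0 < e -> exists K : nat, forall n : nat, (K <= n)%N ->
    powR (set_norm (setpow M n)) (n.+1%:R)^-1 < e.

Definition compactly_quasinilpotent : Prop :=
  forall M : set V, precompact_set M -> jsr_zero M.

Definition is_ideal_of (I J : set V) : Prop :=
  [/\ J `<=` I, J 0,
      forall x y, J x -> J y -> J (x + y),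
      forall (k : R[i]) x, J x -> J (k *: x)
    & forall a x, I a -> J x -> J (mul a x) /\ J (mul x a)].

Definition is_ideal (I : set V) : Prop := is_ideal_of setT I.

Definition closed_in (I J : set V) : Prop :=
  forall x, I x ->
    (forall e : R, 0 < e -> exists j, J j /\ N (x - j) < e) -> J x.

Definition qnorm (J : set V) (x : V) : R := inf [set N (x - j) | j in J].

(* a + J is a compact element of the normed algebra I/J:
   the operator  x + J |-> a x a + J  on I/J maps the closed unit ball
   of I/J to a precompact (totally bounded) set *)
Definition compact_elt_quot (I J : set V) (a : V) : Prop :=
  totally_bounded_in (qnorm J) I
    [set mul (mul a x) a | x in [set x | I x /\ qnorm J x <= 1]].

Definition hypocompact (I : set V) : Prop :=
  forall J : set V, is_ideal_of I J -> closed_in I J ->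
    (exists x, I x /\ ~ J x) ->
    exists a, [/\ I a, ~ J a & compact_elt_quot I J a].

End BanachAlgebras.

(* Main.v *)
Require Import Defs.
From HB Require Import structures.
From mathcomp Require Import all_boot all_order all_algebra.
From mathcomp Require Import all_classical all_reals all_analysis.
From mathcomp Require Import complex.
From mathcomp Require Import zify ring.
Import Order.TTheory GRing.Theory Num.Theory.
Local Open Scope classical_set_scope.
Local Open Scope ring_scope.

Set Implicit Arguments. Unset Strict Implicit. Unset Printing Implicit Defensive.

Section Ex.
Variable R : realType.
Local Notation C := R[i].
Local Notation nc := (@ComplexField.Normc.normc R).

Definition F (n : nat) : nat := (4 ^ (n * n))%N.
Definition wt (n : nat) : R := (F n)%:R^-1.

Lemma wt_gt0 n : 0 < wt n.
Proof. by rewrite /wt invr_gt0 ltr0n /F expn_gt0. Qed.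

Lemma nc_ge0 (x : C) : 0 <= nc x.
Proof. by case: x => a b; rewrite /= sqrtr_ge0. Qed.
Lemma ncD (x y : C) : nc (x + y) <= nc x + nc y.
Proof. exact: le_normcD. Qed.
Lemma ncN (x : C) : nc (- x) = nc x.
Proof. exact: normcN. Qed.
Lemma ncM (x y : C) : nc (x * y) = nc x * nc y.
Proof. exact: ComplexField.Normc.normcM. Qed.
Lemma nc0 : nc 0 = 0.
Proof. exact: ComplexField.Normc.normc0. Qed.
Lemma nc_eq0 (x : C) : nc x = 0 -> x = 0.
Proof. exact: ComplexField.Normc.eq0_normc. Qed.

Record vec := Vec { vf : seq nat -> C; vf0 : vf [::] = 0;
  vfb : exists M : R, forall s, nc (vf s) * wt (size s) <= M }.

HB.instance Definition _ := gen_eqMixin vec.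
HB.instance Definition _ := gen_choiceMixin vec.

Lemma vec_ext (u v : vec) : vf u =1 vf v -> u = v.
Proof.
case: u => f f0 fb; case: v => g g0 gb /= /funext e; subst g.
by rewrite (Prop_irrelevance f0 g0) (Prop_irrelevance fb gb).
Qed.

Definition zerof : seq nat -> C := fun _ => 0.
Lemma zero0 : zerof [::] = 0. Proof. by []. Qed.
Lemma zerob : exists M : R, forall s, nc (zerof s) * wt (size s) <= M.
Proof. by exists 0 => s; rewrite /zerof nc0 mul0r. Qed.
Definition vzero := Vec zero0 zerob.

Section Ops.
Variables (k : C) (u v : vec).
Lemma add0 : (fun s => vf u s + vf v s) [::] = 0.
Proof. by rewrite /= !vf0 addr0. Qed.
Lemma addb : exists M : R, forall s, nc ((fun s => vf u s + vf v s) s) * wt (size s) <= M.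
Proof.
case: (vfb u) => M1 h1; case: (vfb v) => M2 h2; exists (M1 + M2) => s /=.
apply: le_trans (_ : (nc (vf u s) + nc (vf v s)) * wt (size s) <= _).
  by rewrite ler_pM2r ?wt_gt0 // ncD.
by rewrite mulrDl lerD.
Qed.
Definition vadd := Vec add0 addb.
Lemma opp0 : (fun s => - vf u s) [::] = 0.
Proof. by rewrite /= vf0 oppr0. Qed.
Lemma oppb : exists M : R, forall s, nc ((fun s => - vf u s) s) * wt (size s) <= M.
Proof. by case: (vfb u) => M h; exists M => s /=; rewrite ncN. Qed.
Definition vopp := Vec opp0 oppb.
Lemma scl0 : (fun s => k * vf u s) [::] = 0.
Proof. by rewrite /= vf0 mulr0. Qed.
Lemma sclb : exists M : R, forall s, nc ((fun s => k * vf u s) s) * wt (size s) <= M.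
Proof.
case: (vfb u) => M h; exists (nc k * M) => s /=.
by rewrite ncM -mulrA ler_wpM2l ?nc_ge0.
Qed.
Definition vscale := Vec scl0 sclb.
End Ops.

Lemma vaddA : associative vadd.
Proof. by move=> u v w; apply: vec_ext => s /=; rewrite addrA. Qed.
Lemma vaddC : commutative vadd.
Proof. by move=> u v; apply: vec_ext => s /=; rewrite addrC. Qed.
Lemma vadd0 : left_id vzero vadd.
Proof. by move=> u; apply: vec_ext => s /=; rewrite /zerof add0r. Qed.
Lemma vaddN : left_inverse vzero vopp vadd.
Proof. by move=> u; apply: vec_ext => s /=; rewrite addNr. Qed.
HB.instance Definition _ := GRing.isZmodule.Build vec vaddA vaddC vadd0 vaddN.

Lemma vsclA (a b : C) (v : vec) : vscale a (vscale b v) = vscale (a * b) v.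
Proof. by apply: vec_ext => s /=; rewrite mulrA. Qed.
Lemma vscl1 : left_id 1 vscale.
Proof. by move=> v; apply: vec_ext => s /=; rewrite mul1r. Qed.
Lemma vsclDr : right_distributive vscale +%R.
Proof. by move=> a u v; apply: vec_ext => s /=; rewrite mulrDr. Qed.
Lemma vsclDl (v : vec) : {morph vscale^~ v : a b / a + b}.
Proof. by move=> a b; apply: vec_ext => s /=; rewrite mulrDl. Qed.
HB.instance Definition _ := GRing.Zmodule_isLmodule.Build C vec vsclA vscl1 vsclDr vsclDl.

Lemma vfD (u v : vec) s : vf (u + v) s = vf u s + vf v s. Proof. by []. Qed.
Lemma vfN (u : vec) s : vf (- u) s = - vf u s. Proof. by []. Qed.
Lemma vfB (u v : vec) s : vf (u - v) s = vf u s - vf v s. Proof. by []. Qed.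
Lemma vfZ (k : C) (u : vec) s : vf (k *: u) s = k * vf u s. Proof. by []. Qed.
Lemma vf00 s : vf (0 : vec) s = 0. Proof. by []. Qed.

End Ex.

Set Implicit Arguments. Unset Strict Implicit. Unset Printing Implicit Defensive.

Section Ex2.
Variable R : realType.
Local Notation C := R[i].
Local Notation nc := (@ComplexField.Normc.normc R).
Local Notation vec := (vec R).
Local Notation wt := (@wt R).

Definition Nv (v : vec) : R := sup [set nc (vf v s) * wt (size s) | s in setT].

Lemma Nv_ge (v : vec) s : nc (vf v s) * wt (size s) <= Nv v.
Proof.
apply: ub_le_sup; last by exists s.
case: (vfb v) => M hM; exists M => _ [t _ <-]; exact: hM.
Qed.

Lemma Nv_le (v : vec) c : (forall s, nc (vf v s) * wt (size s) <= c) -> Nv v <= c.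
Proof.
move=> h; apply: ge_sup; first by exists (nc (vf v [::]) * wt 0), [::].
by move=> _ [t _ <-].
Qed.

Lemma Nv_ge0 (v : vec) : 0 <= Nv v.
Proof. apply: le_trans (Nv_ge v [::]); by rewrite mulr_ge0 ?nc_ge0 ?ltW ?wt_gt0. Qed.

Lemma Nv_pt (v : vec) s : nc (vf v s) <= Nv v / wt (size s).
Proof. by rewrite ler_pdivlMr ?wt_gt0 // Nv_ge. Qed.

Lemma Nv_eq0 (v : vec) : Nv v = 0 -> v = 0.
Proof.
move=> h; apply: vec_ext => s; rewrite vf00; apply: nc_eq0.
apply/eqP; rewrite eq_le nc_ge0 andbT.
by have := Nv_pt v s; rewrite h mul0r.
Qed.

Lemma NvD (u v : vec) : Nv (u + v) <= Nv u + Nv v.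
Proof.
apply: Nv_le => s; rewrite vfD.
apply: le_trans (_ : (nc (vf u s) + nc (vf v s)) * wt (size s) <= _).
  by rewrite ler_pM2r ?wt_gt0 // ncD.
by rewrite mulrDl lerD ?Nv_ge.
Qed.

Lemma NvZ (k : C) (v : vec) : Nv (k *: v) = nc k * Nv v.
Proof.
apply/eqP; rewrite eq_le; apply/andP; split.
  by apply: Nv_le => s; rewrite vfZ ncM -mulrA ler_wpM2l ?nc_ge0 ?Nv_ge.
have [->|k0] := eqVneq k 0.
  by rewrite nc0 mul0r Nv_ge0.
have nk : 0 < nc k.
  by rewrite lt_def nc_ge0 andbT; apply/eqP => /nc_eq0 /eqP; rewrite (negbTE k0).
rewrite -ler_pdivlMl //; apply: Nv_le => s.
have := Nv_ge (k *: v) s; rewrite vfZ ncM -mulrA => h.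
by rewrite -(ler_pM2l nk) mulVKf ?gt_eqF.
Qed.

Lemma NvN (v : vec) : Nv (- v) = Nv v.
Proof.
have nc1 : nc 1 = 1 by exact: ComplexField.Normc.normc1.
by rewrite -scaleN1r NvZ ncN nc1 mul1r. Qed.

Lemma NvB (u v : vec) : Nv (u - v) = Nv (v - u).
Proof. by rewrite -NvN opprB. Qed.

Lemma Nv0 : Nv 0 = 0.
Proof. by apply/eqP; rewrite eq_le Nv_ge0 andbT; apply: Nv_le => s; rewrite vf00 nc0 mul0r. Qed.

End Ex2.

Set Implicit Arguments. Unset Strict Implicit. Unset Printing Implicit Defensive.

Section Ex3.
Variable R : realType.
Local Notation C := R[i].
Local Notation nc := (@ComplexField.Normc.normc R).

Fixpoint cp (f g : seq nat -> C) (s : seq nat) : C :=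
  match s with
  | [::] => f [::] * g [::]
  | x :: s' => f [::] * g s + cp (fun t => f (x :: t)) g s'
  end.

Lemma cpE f g s : cp f g s = \sum_(k < (size s).+1) f (take k s) * g (drop k s).
Proof.
elim: s f => [|x s IH] f /=; first by rewrite big_ord_recl big_ord0 addr0.
by rewrite big_ord_recl IH.
Qed.

Lemma cpDl f1 f2 g s : cp (fun t => f1 t + f2 t) g s = cp f1 g s + cp f2 g s.
Proof. by rewrite !cpE -big_split /=; apply: eq_bigr => k _; rewrite mulrDl. Qed.
Lemma cpDr f g1 g2 s : cp f (fun t => g1 t + g2 t) s = cp f g1 s + cp f g2 s.
Proof. by rewrite !cpE -big_split /=; apply: eq_bigr => k _; rewrite mulrDr. Qed.
Lemma cpZl (a : C) f g s : cp (fun t => a * f t) g s = a * cp f g s.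
Proof. by rewrite !cpE mulr_sumr; apply: eq_bigr => k _; rewrite mulrA. Qed.
Lemma cpZr (a : C) f g s : cp f (fun t => a * g t) s = a * cp f g s.
Proof. by rewrite !cpE mulr_sumr; apply: eq_bigr => k _; rewrite mulrCA. Qed.

Lemma cpA f g h s : cp (cp f g) h s = cp f (cp g h) s.
Proof.
elim: s f g h => [|x s IH] f g h /=; first by rewrite mulrA.
by rewrite cpDl cpZl IH mulrDr !mulrA addrA.
Qed.

Definition supp (p : nat) (f : seq nat -> C) := forall s, (size s < p)%N -> f s = 0.

Lemma cp_supp p q f g : supp p f -> supp q g -> supp (p + q) (cp f g).
Proof.
move=> hf hg s hs; rewrite cpE big1 // => k _.
have hk : (k <= size s)%N by rewrite -ltnS.
case: (ltnP k p) => kp.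
  rewrite hf ?mul0r // size_take_min; lia.
rewrite hg ?mulr0 // size_drop.
move: hs kp; rewrite -(ltn_add2r q) => hs kp. lia.
Qed.

Lemma cp_lead p q f g u v : supp p f -> supp q g -> size u = p -> size v = q ->
  cp f g (u ++ v) = f u * g v.
Proof.
move=> hf hg su sv; rewrite cpE size_cat.
have hp : (p < (size u + size v).+1)%N by rewrite ltnS su leq_addr.
rewrite (bigD1 (Ordinal hp)) //= big1 ?addr0.
  by rewrite take_size_cat ?drop_size_cat.
move=> k /eqP hk.
have hk' : nat_of_ord k <> p by move=> e; apply: hk; apply: val_inj.
have := ltn_ord k; rewrite ltnS => kle.
case: (ltnP k p) => kp.
  rewrite hf ?mul0r // size_take_min size_cat; lia.
rewrite hg ?mulr0 // size_drop size_cat; lia.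
Qed.

End Ex3.

Set Implicit Arguments. Unset Strict Implicit. Unset Printing Implicit Defensive.

Section NatS.
Local Open Scope nat_scope.
Lemma F_ineq k j : (0 < k)%N -> (0 < j)%N ->
  (F k * F j * ((k + j).+1 * 2 ^ k) <= F (k + j))%N.
Proof.
move=> k0 j0; rewrite /F.
have -> : ((k + j) * (k + j) = k * k + j * j + 2 * (k * j))%N by ring.
rewrite [(4 ^ (_ + 2 * _))%N]expnD [(4 ^ (k * k + _))%N]expnD -!mulnA !leq_pmul2l ?expn_gt0 //.
have h1 : ((k + j).+1 <= 2 ^ (k + j))%N by apply: ltn_expl.
apply: (@leq_trans (2 ^ (k + j) * 2 ^ k)); first by rewrite leq_mul2r h1 orbT.
rewrite -expnD.
have -> : (4 = 2 ^ 2)%N by [].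
rewrite -expnM leq_pexp2l //.
have e1 : (k <= k * j)%N by rewrite leq_pmulr.
have e2 : (j <= k * j)%N by rewrite leq_pmull.
lia.
Qed.

End NatS.
Section Ex4.
Variable R : realType.
Local Notation C := R[i].
Local Notation nc := (@ComplexField.Normc.normc R).
Local Notation vec := (vec R).
Local Notation wt := (@wt R).

Lemma Fpos n : (0 < F n)%N. Proof. by rewrite /F expn_gt0. Qed.

Lemma wt_le n k : (0 < k)%N -> (k < n)%N ->
  wt n <= wt k * wt (n - k) / ((n.+1)%:R * (2 ^ k)%:R).
Proof.
move=> k0 kn; have hj : (0 < n - k)%N by rewrite subn_gt0.
have h := F_ineq k0 hj; rewrite subnKC in h; last exact: ltnW.
rewrite /wt -!invfM -!natrM.
have p1 : (0 < F n)%N := Fpos n.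
have p2 : (0 < F k * F (n - k) * (n.+1 * 2 ^ k))%N by rewrite !muln_gt0 !Fpos expn_gt0.
by rewrite lef_pV2 ?posrE ?ltr0n // ler_nat.
Qed.

Lemma nc_sum m (G : 'I_m -> C) : nc (\sum_(i < m) G i) <= \sum_(i < m) nc (G i).
Proof.
elim: m G => [|m IH] G; first by rewrite !big_ord0 nc0.
rewrite !big_ord_recr /=; apply: le_trans (ncD _ _) _; by rewrite lerD2r IH.
Qed.

Lemma cp_bound p f g A B s : (0 < p)%N -> supp p f -> g [::] = 0 ->
  (forall t, nc (f t) * wt (size t) <= A) -> (forall t, nc (g t) * wt (size t) <= B) ->
  nc (cp f g s) * wt (size s) <= A * B / (2 ^ p)%:R.
Proof.
move=> p0 hf g0 hA hB.
have A0 : 0 <= A by apply: le_trans (hA [::]); rewrite hf // nc0 mul0r.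
have B0 : 0 <= B by apply: le_trans (hB [::]); rewrite g0 nc0 mul0r.
set n := size s.
pose c := A * B / ((n.+1)%:R * (2 ^ p)%:R).
have c0 : 0 <= c by rewrite /c !mulr_ge0 // invr_ge0 mulr_ge0.
rewrite cpE; apply: le_trans (_ : (\sum_(k < n.+1) nc (f (take k s) * g (drop k s))) * wt n <= _).
  by rewrite ler_pM2r ?wt_gt0 // nc_sum.
rewrite mulr_suml; apply: le_trans (_ : \sum_(k < n.+1) c <= _); last first.
  rewrite sumr_const card_ord.
  have hn : (n.+1)%:R != 0 :> R by rewrite pnatr_eq0.
  have hp : (2 ^ p)%:R != 0 :> R by rewrite pnatr_eq0 expn_eq0.
  rewrite le_eqVlt; apply/orP; left; apply/eqP; rewrite /c -mulr_natr.
  by field; rewrite hp /= paddr_eq0 ?ler0n // oner_eq0.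
apply: ler_sum => k _; rewrite ncM.
have kn : (k <= n)%N by rewrite -ltnS.
case: (ltnP k p) => kp.
  by rewrite hf ?nc0 ?mul0r // size_take_min; lia.
case: (ltnP k n) => kn'; last first.
  have -> : drop k s = [::] by apply: drop_oversize.
  by rewrite g0 nc0 mulr0 mul0r.
have k0 : (0 < k)%N by lia.
set a := nc (f (take k s)); set b := nc (g (drop k s)).
have ha : a * wt k <= A by have := hA (take k s); rewrite size_take_min (minn_idPl kn).
have hb : b * wt (n - k) <= B by have := hB (drop k s); rewrite size_drop.
have a0 : 0 <= a by exact: nc_ge0.
have b0 : 0 <= b by exact: nc_ge0.
apply: le_trans (_ : a * b * (wt k * wt (n - k) / ((n.+1)%:R * (2 ^ k)%:R)) <= _).
  by rewrite ler_wpM2l ?mulr_ge0 // wt_le.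
have -> : a * b * (wt k * wt (n - k) / ((n.+1)%:R * (2 ^ k)%:R)) =
   (a * wt k) * (b * wt (n - k)) / ((n.+1)%:R * (2 ^ k)%:R) by ring.
apply: le_trans (_ : A * B / ((n.+1)%:R * (2 ^ k)%:R) <= _).
  apply: ler_wpM2r; first by rewrite invr_ge0 mulr_ge0 // ler0n.
  by apply: ler_pM => //; apply: mulr_ge0 => //; apply: ltW; apply: wt_gt0.
rewrite /c; apply: ler_wpM2l; first by rewrite mulr_ge0.
rewrite lef_pV2 ?posrE ?mulr_gt0 ?ltr0n ?expn_gt0 //.
by rewrite ler_pM2l ?ltr0n // ler_nat leq_pexp2l.
Qed.

Lemma vsupp1 (u : vec) : supp 1 (vf u).
Proof. by move=> s; rewrite ltnS leqn0 size_eq0 => /eqP ->; rewrite vf0. Qed.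

Section Mul.
Variables (u v : vec).
Lemma mul0 : cp (vf u) (vf v) [::] = 0.
Proof. by rewrite /= vf0 mul0r. Qed.
Lemma mulb : exists M : R, forall s, nc (cp (vf u) (vf v) s) * wt (size s) <= M.
Proof.
exists (Nv u * Nv v / (2 ^ 1)%:R) => s.
apply: cp_bound => //; [exact: vsupp1 | exact: vf0 | exact: Nv_ge | exact: Nv_ge].
Qed.
Definition vmul := Vec mul0 mulb.
End Mul.

Lemma vmulE u v s : vf (vmul u v) s = cp (vf u) (vf v) s. Proof. by []. Qed.

Lemma Nv_mul_supp p (u v : vec) : (0 < p)%N -> supp p (vf u) ->
  Nv (vmul u v) <= Nv u * Nv v / (2 ^ p)%:R.
Proof.
move=> p0 hp; apply: Nv_le => s; rewrite vmulE.
apply: cp_bound => //; [exact: vf0 | exact: Nv_ge | exact: Nv_ge].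
Qed.

Lemma Nv_mul (u v : vec) : Nv (vmul u v) <= Nv u * Nv v.
Proof.
apply: le_trans (@Nv_mul_supp 1 u v isT (vsupp1 u)) _.
by rewrite ler_pdivrMr ?ltr0n // ler_peMr ?mulr_ge0 ?Nv_ge0 // ler1n.
Qed.

Lemma vmulA (a b c : vec) : vmul a (vmul b c) = vmul (vmul a b) c.
Proof. by apply: vec_ext => s; rewrite !vmulE -cpA. Qed.
Lemma vmulDl (a b c : vec) : vmul (a + b) c = vmul a c + vmul b c.
Proof. by apply: vec_ext => s; rewrite vfD !vmulE -cpDl. Qed.
Lemma vmulDr (a b c : vec) : vmul a (b + c) = vmul a b + vmul a c.
Proof. by apply: vec_ext => s; rewrite vfD !vmulE -cpDr. Qed.
Lemma vmulZl (k : C) (a b : vec) : vmul (k *: a) b = k *: vmul a b.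
Proof. by apply: vec_ext => s; rewrite vfZ !vmulE -cpZl. Qed.
Lemma vmulZr (k : C) (a b : vec) : vmul a (k *: b) = k *: vmul a b.
Proof. by apply: vec_ext => s; rewrite vfZ !vmulE -cpZr. Qed.

Lemma vmul_supp p q (u v : vec) : supp p (vf u) -> supp q (vf v) -> supp (p + q) (vf (vmul u v)).
Proof. exact: cp_supp. Qed.

End Ex4.

Import numFieldNormedType.Exports.
Set Implicit Arguments. Unset Strict Implicit. Unset Printing Implicit Defensive.

Section Ex5.
Variable R : realType.
Local Notation C := R[i].
Local Notation nc := (@ComplexField.Normc.normc R).
Local Notation vec := (vec R).
Local Notation wt := (@wt R).

Lemma real_cauchy (x : nat -> R) :
  (forall e : R, 0 < e -> exists M : nat, forall m n : nat,
        (M <= m)%N -> (M <= n)%N -> `|x m - x n| < e) ->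
  exists l : R, forall e : R, 0 < e -> exists M : nat, forall n : nat,
        (M <= n)%N -> `|x n - l| < e.
Proof.
move=> hc.
have : cvg (x @ \oo).
  apply/cauchy_cvgP; apply: cauchy_exP => e e0.
  have [M hM] := hc e e0; exists (x M); exists M => // n /= hn.
  by rewrite /ball /= hM.
move=> /cvgrPdist_lt h; exists (lim (x @ \oo)) => e e0.
have [M _ hM] := h e e0; exists M => n hn; rewrite distrC; exact: hM.
Qed.


Lemma nc_Re (x : C) : `|complex.Re x| <= nc x.
Proof.
case: x => a b /=; rewrite -sqrtr_sqr ler_sqrt ?addr_ge0 ?sqr_ge0 //.
by rewrite lerDl sqr_ge0.
Qed.
Lemma nc_Im (x : C) : `|complex.Im x| <= nc x.
Proof.
case: x => a b /=; rewrite -sqrtr_sqr ler_sqrt ?addr_ge0 ?sqr_ge0 //.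
by rewrite lerDr sqr_ge0.
Qed.
Lemma nc_le (x : C) : nc x <= `|complex.Re x| + `|complex.Im x|.
Proof.
case: x => a b /=; rewrite -[X in _ <= X]ger0_norm ?addr_ge0 //.
rewrite -sqrtr_sqr ler_sqrt ?sqr_ge0 // sqrrD !real_normK ?num_real //.
by rewrite -addrA lerD2l lerDr mulrn_wge0 ?mulr_ge0.
Qed.
Lemma ReB (x y : C) : complex.Re (x - y) = complex.Re x - complex.Re y. Proof. by case: x; case: y. Qed.
Lemma ImB (x y : C) : complex.Im (x - y) = complex.Im x - complex.Im y. Proof. by case: x; case: y. Qed.

Lemma cpx_cauchy (z : nat -> C) :
  (forall e : R, 0 < e -> exists M : nat, forall m n : nat,
        (M <= m)%N -> (M <= n)%N -> nc (z m - z n) < e) ->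
  exists l : C, forall e : R, 0 < e -> exists M : nat, forall n : nat,
        (M <= n)%N -> nc (z n - l) < e.
Proof.
move=> hc.
have [la hla] : exists la, forall e : R, 0 < e -> exists M : nat, forall n : nat,
        (M <= n)%N -> `|complex.Re (z n) - la| < e.
  apply: real_cauchy => e e0; have [M hM] := hc e e0; exists M => m n hm hn.
  by rewrite -ReB; apply: le_lt_trans (nc_Re _) (hM _ _ hm hn).
have [lb hlb] : exists lb, forall e : R, 0 < e -> exists M : nat, forall n : nat,
        (M <= n)%N -> `|complex.Im (z n) - lb| < e.
  apply: real_cauchy => e e0; have [M hM] := hc e e0; exists M => m n hm hn.
  by rewrite -ImB; apply: le_lt_trans (nc_Im _) (hM _ _ hm hn).
exists (la +i* lb)%C => e e0.
have e2 : 0 < e / 2 by rewrite divr_gt0.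
have [Ma hMa] := hla _ e2; have [Mb hMb] := hlb _ e2.
exists (maxn Ma Mb) => n hn.
apply: le_lt_trans (nc_le _) _; rewrite ReB ImB /=.
rewrite (splitr e) ltrD // ?hMa ?hMb //; lia.
Qed.

End Ex5.

Set Implicit Arguments. Unset Strict Implicit. Unset Printing Implicit Defensive.

Section Ex6.
Variable R : realType.
Local Notation C := R[i].
Local Notation nc := (@ComplexField.Normc.normc R).
Local Notation vec := (vec R).
Local Notation wt := (@wt R).

Lemma nc_tri (a b c : C) : nc (a - c) <= nc (a - b) + nc (b - c).
Proof.
have -> : a - c = (a - b) + (b - c) by rewrite addrA subrK.
exact: ncD.
Qed.

Lemma vec_complete : @is_complete R vec (@Nv R).
Proof.
move=> u hc.
have hpt : forall s, exists l : C, forall e : R, 0 < e -> exists M : nat,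
    forall n : nat, (M <= n)%N -> nc (vf (u n) s - l) < e.
  move=> s; apply: cpx_cauchy => e e0.
  have [M hM] := hc (e * wt (size s)) (mulr_gt0 e0 (wt_gt0 _ _)).
  exists M => m n hm hn; rewrite -vfB.
  apply: le_lt_trans (Nv_pt _ _) _.
  by rewrite ltr_pdivrMr ?wt_gt0 // hM.
have [L hL] := choice hpt.
have K : forall e : R, 0 < e -> exists M : nat, forall N : nat, (M <= N)%N ->
    forall s, nc (vf (u N) s - L s) * wt (size s) <= e.
  move=> e e0; have [M hM] := hc e e0; exists M => N hN s.
  apply/ler_addgt0Pr => d d0.
  have wt0 := wt_gt0 R (size s).
  have [M' hM'] := hL s (d / wt (size s)) (divr_gt0 d0 wt0).
  set n := maxn N M'.
  have h1 : nc (vf (u n) s - L s) < d / wt (size s) by apply: hM'; lia.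
  have h2 : Nv (u N - u n) < e by apply: hM => //; lia.
  apply: le_trans (_ : (nc (vf (u N) s - vf (u n) s) + nc (vf (u n) s - L s)) * wt (size s) <= _).
    by rewrite ler_pM2r // nc_tri.
  rewrite mulrDl; apply: lerD.
    by rewrite -vfB; apply: le_trans (Nv_ge _ _) (ltW h2).
  by rewrite -ler_pdivlMr // ltW.
have L0 : L [::] = 0.
  apply: nc_eq0; apply/eqP; rewrite eq_le nc_ge0 andbT; apply/ler_addgt0Pr => d d0.
  have [M hM] := hL [::] d d0; have := hM M (leqnn _).
  by rewrite vf0 sub0r ncN add0r => /ltW.
have Lb : exists M : R, forall s, nc (L s) * wt (size s) <= M.
  have [M1 hM1] := K 1 ltr01; exists (Nv (u M1) + 1) => s.
  have := hM1 M1 (leqnn _) s.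
  move=> hK.
  have ht : nc (L s) <= nc (vf (u M1) s) + nc (vf (u M1) s - L s).
    have {1}-> : L s = vf (u M1) s - (vf (u M1) s - L s) by rewrite opprB addrC subrK.
    by apply: le_trans (ncD _ _) _; rewrite ncN.
  apply: le_trans (_ : (nc (vf (u M1) s) + nc (vf (u M1) s - L s)) * wt (size s) <= _).
    by rewrite ler_pM2r ?wt_gt0.
  by rewrite mulrDl lerD ?Nv_ge.
exists (Vec L0 Lb) => e e0.
have [M hM] := K (e / 2) (divr_gt0 e0 (ltr0Sn _ 1)).
exists M => n hn; apply: le_lt_trans (_ : Nv (u n - Vec L0 Lb) <= e / 2) _.
  by apply: Nv_le => s; rewrite vfB /=; exact: hM.
by rewrite ltr_pdivrMr // ltr_pMr // ltr1n.
Qed.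

End Ex6.

Set Implicit Arguments. Unset Strict Implicit. Unset Printing Implicit Defensive.

Fixpoint T (n : nat) : nat := if n is m.+1 then (T m + n)%N else 0%N.
Lemma T2 n : (T n * 2 = n * n.+1)%N.
Proof. elim: n => [|n IH] //=; rewrite mulnDl IH; ring. Qed.

Section Ex7.
Variable R : realType.
Local Notation C := R[i].
Local Notation nc := (@ComplexField.Normc.normc R).
Local Notation vec := (vec R).
Local Notation wt := (@wt R).
Local Notation Nv := (@Nv R).
Local Notation vmul := (@vmul R).

Lemma bounded_of_pc (M : set vec) : @precompact_set R vec Nv M ->
  exists Cb : R, 1 <= Cb /\ forall x, M x -> Nv x <= Cb.
Proof.
move=> /(_ 1 ltr01) [k [y [_ hy]]].
exists (\sum_(i < k) Nv (y i) + 1); split.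
  by rewrite lerDr sumr_ge0 // => i _; exact: Nv_ge0.
move=> x /hy [i [ik hi]].
have -> : x = (x - y i) + y i by rewrite subrK.
apply: le_trans (NvD _ _) _; rewrite addrC; apply: lerD; last exact: ltW.
rewrite (bigD1 (Ordinal ik)) //= lerDl sumr_ge0 // => j _; exact: Nv_ge0.
Qed.

Lemma setpow_bound (M : set vec) Cb : 1 <= Cb -> (forall x, M x -> Nv x <= Cb) ->
  forall n c, setpow vmul M n c -> supp n.+1 (vf c) /\ Nv c <= Cb ^+ n.+1 / (2 ^ T n)%:R.
Proof.
move=> C1 hM; elim => [|n IH] c /=.
  by move=> hc; split; [exact: vsupp1 | rewrite expr1 divr1 hM].
move=> [a [b [ha hb ->]]]; have [sa na] := IH a ha; split.
  by rewrite -addn1; apply: vmul_supp => //; exact: vsupp1.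
apply: le_trans (@Nv_mul_supp R n.+1 a b isT sa) _.
have C0 : 0 <= Cb by apply: le_trans C1.
apply: le_trans (_ : Cb ^+ n.+1 / (2 ^ T n)%:R * Cb / (2 ^ n.+1)%:R <= _).
  apply: ler_wpM2r; first by rewrite invr_ge0 ler0n.
  apply: ler_pM => //; [exact: Nv_ge0 | exact: Nv_ge0 | exact: hM].
rewrite le_eqVlt; apply/orP; left; apply/eqP.
rewrite expnD natrM exprSr.
have h1 : (2 ^ T n)%:R != 0 :> R by rewrite pnatr_eq0 expn_eq0.
have h2 : (2 ^ n.+1)%:R != 0 :> R by rewrite pnatr_eq0 expn_eq0.
by rewrite !exprSr invfM; ring.
Qed.


Lemma sup_bound (S : set R) (B : R) : 0 <= B -> (forall x, S x -> 0 <= x <= B) ->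
  0 <= sup S <= B.
Proof.
move=> B0 hS; have [[x Sx]|ne] := pselect (S !=set0).
  apply/andP; split.
    have /andP[x0 _] := hS x Sx; apply: le_trans x0 _.
    by apply: ub_le_sup => //; exists B => y /hS /andP[].
  by apply: ge_sup; [exists x | move=> y /hS /andP[]].
have -> : S = set0.
  by apply/seteqP; split => // y Sy; exfalso; apply: ne; exists y.
by rewrite sup0 lexx.
Qed.

Lemma vec_cqn : @compactly_quasinilpotent R vec vmul Nv.
Proof.
move=> M /bounded_of_pc [Cb [C1 hM]] e e0.
have Cb0 : 0 < Cb by apply: lt_le_trans C1.
set K := Num.bound (Cb / e).
have hK : Cb / e < (2 ^ K)%:R.
  apply: lt_le_trans (archi_boundP _) _; first by rewrite divr_ge0 ?ltW.
  by rewrite ler_nat ltnW // ltn_expl.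
set q := Cb / (2 ^ K)%:R.
have q0 : 0 <= q by rewrite divr_ge0 ?ltW.
have qe : q < e.
  by rewrite /q ltr_pdivrMr ?ltr0n ?expn_gt0 // mulrC -ltr_pdivrMr.
exists (2 * K)%N => n hn.
have Bq : forall a, setpow vmul M n a -> Nv a <= q ^+ n.+1.
  move=> a /(setpow_bound C1 hM) [_ ha]; apply: le_trans ha _.
  rewrite /q exprMn exprVn -natrX -expnM.
  apply: ler_wpM2l; first by rewrite exprn_ge0 ?ltW.
  rewrite lef_pV2 ?posrE ?ltr0n ?expn_gt0 // ler_nat leq_pexp2l //.
  have := T2 n; nia.
have hs : 0 <= set_norm Nv (setpow vmul M n) <= q ^+ n.+1.
  apply: sup_bound; first by rewrite exprn_ge0.
  by move=> _ [a ha <-]; rewrite Nv_ge0 Bq.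
case/andP: hs => hs1 hs2.
have r0 : 0 <= (n.+1%:R : R)^-1 by rewrite invr_ge0 ler0n.
apply: le_lt_trans (ge0_ler_powR r0 _ _ hs2) _; rewrite ?nnegrE ?exprn_ge0 //.
rewrite -powR_mulrn // -powRrM mulfV ?pnatr_eq0 // powRr1 //.
Qed.

End Ex7.

Set Implicit Arguments. Unset Strict Implicit. Unset Printing Implicit Defensive.

Lemma pigeon k (g : nat -> nat) : (forall l, (l <= k)%N -> (g l < k)%N) ->
  exists l1 l2, [/\ (l1 <= k)%N, (l2 <= k)%N, l1 <> l2 & g l1 = g l2].
Proof.
move=> hg.
pose f (x : 'I_k.+1) : 'I_k := Ordinal (hg x (ltn_ord x)).
have [inj|/injectivePn [x [y xy fxy]]] := boolP (injectiveb f).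
  have := @leq_card _ _ f (injectiveP _ inj). rewrite !card_ord. by rewrite ltnn.
exists x, y; split; [by rewrite -ltnS ltn_ord | by rewrite -ltnS ltn_ord | | ].
  by move=> e; move: xy; rewrite (val_inj e) eqxx.
by move: fxy => /(congr1 val).
Qed.

Lemma min_ex (P : nat -> Prop) : (exists n, P n) ->
  exists n, P n /\ forall k, (k < n)%N -> ~ P k.
Proof.
move=> [n Pn]; elim/ltn_ind: n Pn => n IH Pn.
case: (pselect (exists k, (k < n)%N /\ P k)) => [[k [kn Pk]]|h].
  exact: IH k kn Pk.
by exists n; split => // k kn Pk; apply: h; exists k.
Qed.

Section Ex8.
Variable R : realType.
Local Notation C := R[i].
Local Notation nc := (@ComplexField.Normc.normc R).
Local Notation vec := (vec R).
Local Notation wt := (@wt R).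
Local Notation Nv := (@Nv R).
Local Notation vmul := (@vmul R).

Lemma wt_le1 n : wt n <= 1.
Proof. by rewrite /wt invf_le1 ?ltr0n ?Fpos // ler1n Fpos. Qed.

Section Ev.
Variable i : nat.
Definition evf (s : seq nat) : C := if s == [:: i] then 1 else 0.
Lemma evf0 : evf [::] = 0. Proof. by []. Qed.
Lemma evfb : exists M : R, forall s, nc (evf s) * wt (size s) <= M.
Proof.
exists 1 => s; rewrite /evf; case: ifP => _.
  have -> : nc 1 = 1 by exact: ComplexField.Normc.normc1.
  by rewrite mul1r wt_le1.
by rewrite nc0 mul0r ler01.
Qed.
Definition ev := Vec evf0 evfb.
End Ev.

Lemma Nv_ev i : Nv (ev i) <= 1.
Proof. by apply: Nv_le => s; case: (evfb i) => M _; rewrite /=; rewrite /evf; case: ifP => _;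
  [have -> : nc 1 = 1 by exact: ComplexField.Normc.normc1 | ]; rewrite ?mul1r ?wt_le1 // nc0 mul0r ler01.
Qed.

Lemma vmul0r (b : vec) : vmul 0 b = 0.
Proof. by rewrite -(scale0r (0 : vec)) vmulZl !scale0r. Qed.
Lemma vmulr0 (b : vec) : vmul b 0 = 0.
Proof. by rewrite -(scale0r (0 : vec)) vmulZr !scale0r. Qed.

Lemma qnorm0 (v : vec) : qnorm Nv [set 0] v = Nv v.
Proof. by rewrite /qnorm image_set1 subr0 inf1. Qed.

Lemma ncC (r : R) : nc ((r%:C)%C) = `|r|.
Proof. by rewrite /= expr0n /= addr0 sqrtr_sqr. Qed.

End Ex8.

Set Implicit Arguments. Unset Strict Implicit. Unset Printing Implicit Defensive.

Section Ex9.
Variable R : realType.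
Local Notation C := R[i].
Local Notation nc := (@ComplexField.Normc.normc R).
Local Notation vec := (vec R).
Local Notation wt := (@wt R).
Local Notation Nv := (@Nv R).
Local Notation vmul := (@vmul R).
Local Notation ev := (@ev R).

Lemma nc_gt0 (x : C) : x != 0 -> 0 < nc x.
Proof. by move=> x0; rewrite lt_def nc_ge0 andbT; apply/eqP => /nc_eq0 /eqP; rewrite (negbTE x0). Qed.

Lemma no_hc (Iset : set vec) : is_ideal vmul Iset -> hypocompact vmul Nv Iset ->
  forall x, Iset x -> x = 0.
Proof.
move=> [_ I0 IA IZ IM] hh x Ix; apply: contrapT => x0.
have hJ : is_ideal_of vmul Iset [set 0].
  split.
  - by move=> y ->.
  - by [].
  - by move=> y z -> ->; rewrite addr0.
  - by move=> k y ->; rewrite scaler0.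
  - by move=> b y _ ->; rewrite vmulr0 vmul0r.
have cJ : closed_in Nv Iset [set 0].
  move=> y _ hy; apply: Nv_eq0; apply/eqP; rewrite eq_le Nv_ge0 andbT.
  apply/ler_addgt0Pr => e e0; have [j [-> hj]] := hy e e0.
  by rewrite subr0 in hj; rewrite add0r ltW.
have [a [Ia a0 ca]] := hh [set 0] hJ cJ (ex_intro _ x (conj Ix x0)).
have [s0 hs0] : exists s, vf a s <> 0.
  apply: contrapT => h; apply: a0; apply: vec_ext => s; rewrite vf00.
  by apply: contrapT => hs; apply: h; exists s.
have [m [[u [su au]] hmin]] := min_ex (P := fun m => exists u, size u = m /\ vf a u <> 0)
   (ex_intro _ (size s0) (ex_intro _ s0 (conj erefl hs0))).
have sa : supp m (vf a).
  move=> s hs; apply: contrapT => hne; apply: (hmin (size s) hs); by exists s.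
have Na : 0 < Nv a.
  rewrite lt_def Nv_ge0 andbT; apply/eqP => /Nv_eq0; exact: a0.
pose c : C := (((Nv a)^-1)%:C)%C.
pose xi i := c *: vmul (ev i) a.
pose yi i := vmul (vmul a (xi i)) a.
have Hyi i : yi i = c *: vmul (vmul (vmul a (ev i)) a) a.
  by rewrite /yi /xi vmulZr vmulZl vmulA.
pose t i := ((u ++ [:: i]) ++ u) ++ u.
have st i : size (t i) = (m + 1 + m + m)%N by rewrite /t !size_cat su.
have key i j : vf (vmul (vmul (vmul a (ev j)) a) a) (t i) =
    vf a u * @evf R j [:: i] * vf a u * vf a u.
  have s1 : supp (m + 1) (vf (vmul a (ev j))) := vmul_supp sa (vsupp1 _).
  have s2 : supp (m + 1 + m) (vf (vmul (vmul a (ev j)) a)) := vmul_supp s1 sa.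
  rewrite vmulE /t (cp_lead s2 sa) ?size_cat ?su //.
  rewrite vmulE (cp_lead s1 sa) ?size_cat ?su //.
  by rewrite vmulE (cp_lead sa (vsupp1 _)).
pose A := vf a u.
pose dl := nc (c * (A * A * A)) * wt (m + 1 + m + m).
have dl0 : 0 < dl.
  rewrite /dl mulr_gt0 ?wt_gt0 // ncM !ncM mulr_gt0 ?mulr_gt0 ?nc_gt0 //; try by apply/eqP.
  apply/eqP => c0; have : nc c = `|(Nv a)^-1| := ncC _.
  by rewrite c0 nc0 => /esym/eqP; rewrite normr_eq0 invr_eq0 (gt_eqF Na).
have sep i j : i != j -> dl <= Nv (yi i - yi j).
  move=> ij; apply: le_trans (Nv_ge _ (t i)); rewrite st /dl ler_pM2r ?wt_gt0 //.
  rewrite vfB !Hyi !vfZ !key /evf eqxx.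
  have -> : ([:: i] == [:: j]) = false by apply/negbTE; move: ij; apply: contra => /eqP [->].
  by rewrite mulr1 mulr0 !mul0r mulr0 subr0.
have Ixi i : Iset (xi i) by apply: IZ; exact: (IM (ev i) a Logic.I Ia).1.
have Nxi i : qnorm Nv [set 0] (xi i) <= 1.
  rewrite qnorm0 /xi NvZ ncC.
  apply: le_trans (_ : `|(Nv a)^-1| * (Nv (ev i) * Nv a) <= _).
    by rewrite ler_wpM2l // Nv_mul.
  rewrite ger0_norm; last by rewrite invr_ge0 ltW.
  by rewrite mulrCA mulVf ?gt_eqF // mulr1 Nv_ev.
have [k [net [_ hnet]]] := ca (dl / 2) (divr_gt0 dl0 (ltr0Sn _ 1)).
have hS l : exists i, (i < k)%N /\ qnorm Nv [set 0] (yi l - net i) < dl / 2.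
  by apply: hnet; exists (xi l) => //.
have [g hg] := choice hS.
have [l1 [l2 [_ _ l12 gl]]] := pigeon (g := g) (fun l _ => (hg l).1).
have := sep l1 l2 (introN eqP l12).
have h1 := (hg l1).2; have h2 := (hg l2).2; rewrite qnorm0 in h1; rewrite qnorm0 in h2.
rewrite gl in h1.
have : Nv (yi l1 - yi l2) < dl.
  have -> : yi l1 - yi l2 = (yi l1 - net (g l2)) + (net (g l2) - yi l2).
    by rewrite addrA subrK.
  apply: le_lt_trans (NvD _ _) _; rewrite (NvB (net _)) (splitr dl) ltrD //.
by move=> /lt_le_trans h /h; rewrite ltxx.
Qed.

End Ex9.

Unset Implicit Arguments.
Theorem proposition3p4 (R : realType) :
  exists (V : lmodType R[i]) (mul : V -> V -> V) (N : V -> R),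
    [/\ banach_algebra mul N,
        exists a : V, a <> 0,
        compactly_quasinilpotent mul N
      & forall I : set V, is_ideal mul I -> hypocompact mul N I ->
          forall x, I x -> x = 0].
Proof.
exists (vec R), (@vmul R), (@Nv R); split.
- split; first split.
  + exact: Nv_ge0.
  + exact: Nv_eq0.
  + exact: NvZ.
  + exact: NvD.
  + exact: vec_complete.
  + split.
    * exact: vmulA.
    * by split; [exact: vmulDl | exact: vmulDr].
    * exact: vmulZl.
    * exact: vmulZr.
    * exact: Nv_mul.
- exists (@ev R 0) => h.
  have := congr1 (fun v => vf v [:: 0%N]) h; rewrite /= /evf eqxx => /eqP.
  by rewrite oner_eq0.
- exact: vec_cqn.
- exact: no_hc.
Qed.
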